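(* Let $G$ be a diamond-free CIS graph. Then $\alpha(G)\cdot\omega(G)\ge |V(G)|$. Consequently, $G$ has a clique or a stable set of size at least $|V(G)|^{1/2}$.
   Context: $\alpha(G)$ is the maximum size of a stable set and $\omega(G)$ the maximum size of a clique in $G$. A clique is strong if it intersects every inclusion-maximal stable set; a graph is CIS if every inclusion-maximal clique is strong. The diamond is $K_4$ minus one edge; diamond-free means no induced subgraph isomorphic to the diamond. *)

(* Defs.v *)
(* A finite simple graph is a symmetric irreflexive
   relation e on a finite type T (the vertex set V(G) = T). *)
From mathcomp Require Import all_boot.
Set Implicit Arguments. Unset Strict Implicit. Unset Printing Implicit Defensive.

Section Graphs.
Variables (T : finType) (e : rel T).

Definition simple_graph : Prop := symmetric e /\ irreflexive e.

Definition stable (S : {set T}) : bool :=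
  [forall x in S, forall y in S, ~~ e x y].

Definition clique (K : {set T}) : bool :=
  [forall x in K, forall y in K, (x != y) ==> e x y].

Definition maximal_stable (S : {set T}) : bool := maxset stable S.
Definition maximal_clique (K : {set T}) : bool := maxset clique K.

Definition alpha : nat := \max_(S : {set T} | stable S) #|S|.
Definition omega : nat := \max_(K : {set T} | clique K) #|K|.

Definition strong_clique (K : {set T}) : bool :=
  [forall S : {set T}, maximal_stable S ==> (K :&: S != set0)].

Definition CIS : Prop := forall K : {set T}, maximal_clique K -> strong_clique K.

Definition diamond_free : Prop :=
  ~ exists a b c d : T,
      [/\ uniq [:: a; b; c; d],
          [&& e a b, e a c, e a d, e b c & e b d] & ~~ e c d].

End Graphs.

(* Main.v *)
Require Import Defs.
From mathcomp Require Import all_boot.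
From mathcomp Require Import all_order all_algebra.
From mathcomp Require Import ring lra.
Set Implicit Arguments. Unset Strict Implicit. Unset Printing Implicit Defensive.
Import Order.TTheory GRing.Theory Num.Theory.

Lemma cliqueP (T : finType) (e : rel T) (K : {set T}) :
  reflect (forall x y, x \in K -> y \in K -> x != y -> e x y) (clique e K).
Proof.
apply: (iffP forall_inP) => [H x y xK yK nxy | H x xK].
  by have := H x xK => /forall_inP/(_ y yK)/implyP; apply.
by apply/forall_inP => y yK; apply/implyP; apply: H.
Qed.

Lemma stableP (T : finType) (e : rel T) (S : {set T}) :
  reflect (forall x y, x \in S -> y \in S -> ~~ e x y) (stable e S).
Proof.
apply: (iffP forall_inP) => [H x y xS yS | H x xS].
  by have := H x xS => /forall_inP/(_ y yS).
by apply/forall_inP => y yS; apply: H.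
Qed.

Lemma clique_pair (T : finType) (e : rel T) u v :
  symmetric e -> e u v -> clique e [set u; v].
Proof.
move=> hs huv; apply/cliqueP => x y; rewrite !inE.
by case/orP=> /eqP-> /orP[]/eqP->; rewrite ?eqxx // => _; rewrite hs.
Qed.

Lemma clique1 (T : finType) (e : rel T) v : clique e [set v].
Proof. by apply/cliqueP => x y; rewrite !inE => /eqP-> /eqP->; rewrite eqxx. Qed.

Lemma meet_le1 (T : finType) (e : rel T) (K S : {set T}) :
  irreflexive e -> clique e K -> stable e S -> #|K :&: S| <= 1.
Proof.
move=> hi /cliqueP hK /stableP hS; apply/card_le1_eqP => x y.
rewrite !inE => /andP[xK xS] /andP[yK yS]; apply/eqP; apply: contraT => nxy.
by move: (hS _ _ yS xS); rewrite (hK y x).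
Qed.

Lemma meet1 (T : finType) (e : rel T) (K S : {set T}) :
  irreflexive e -> CIS e -> maximal_clique e K -> maximal_stable e S ->
  #|K :&: S| = 1.
Proof.
move=> hi hc mK mS; apply/eqP; rewrite eqn_leq (meet_le1 (e := e)) //; last first.
- exact: maxsetp mS.
- exact: maxsetp mK.
rewrite card_gt0; have := hc K mK => /forallP/(_ S)/implyP; exact.
Qed.

Lemma unique_clique (T : finType) (e : rel T) (K1 K2 : {set T}) u v :
  symmetric e -> diamond_free e ->
  maximal_clique e K1 -> maximal_clique e K2 ->
  u \in K1 -> v \in K1 -> u \in K2 -> v \in K2 -> u != v -> K1 = K2.
Proof.
move=> hs hd.
suff H : forall K1 K2, maximal_clique e K1 -> maximal_clique e K2 ->
  u \in K1 -> v \in K1 -> u \in K2 -> v \in K2 -> u != v -> K1 \subset K2.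
  move=> m1 m2 u1 v1 u2 v2 nuv; apply/eqP; rewrite eqEsubset.
  by rewrite (H K1 K2) // (H K2 K1).
move=> {K1 K2} K1 K2 m1 m2 u1 v1 u2 v2 nuv; apply/subsetP => x xK1.
apply: contraT => xK2.
have c1 := cliqueP _ _ (maxsetp m1); have c2 := cliqueP _ _ (maxsetp m2).
have nc : ~~ clique e (x |: K2).
  apply/negP => cx; have := maxsetsup m2 cx (subsetUr _ _) => eqK.
  have : x \in x |: K2 by rewrite setU11.
  by rewrite eqK (negbTE xK2).
have [y [yK2 nxy nexy]] : exists y, [/\ y \in K2, x != y & ~~ e x y].
  case: (pickP [pred y | [&& y \in K2, x != y & ~~ e x y]]) => [y /and3P[? ? ?]|hn].
    by exists y.
  have hx : forall y, y \in K2 -> x != y -> e x y.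
    move=> y yK nxy; have := hn y; rewrite /= yK nxy /=.
    by case: (e x y).
  exfalso; move/negP: nc; apply; apply/cliqueP => a b; rewrite !inE.
  case/orP=> [/eqP->|aK] /orP[/eqP->|bK]; rewrite ?eqxx //.
  - by move=> nxb; apply: hx.
  - by move=> nab; rewrite hs; apply: hx => //; rewrite eq_sym.
  - by apply: c2.
have xu : x != u by apply: contraNneq xK2 => ->.
have xv : x != v by apply: contraNneq xK2 => ->.
have eux : e u x by apply: c1 => //; rewrite eq_sym.
have evx : e v x by apply: c1 => //; rewrite eq_sym.
have yu : y != u by apply: contraNneq nexy => ->; rewrite hs.
have yv : y != v by apply: contraNneq nexy => ->; rewrite hs.
case: hd; exists u, v, x, y; split.
- rewrite /= !inE !negb_or nuv (eq_sym u x) xu (eq_sym u y) yu.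
  by rewrite (eq_sym v x) xv (eq_sym v y) yv nxy.
- rewrite eux evx (c1 u v) // (c2 u y) //; last by rewrite eq_sym.
  by rewrite (c2 v y) // eq_sym.
- exact: nexy.
Qed.


Lemma sum_ind (I : finType) (A : {set I}) (P : pred I) :
  \sum_(x in A) (P x : nat) = #|[set x in A | P x]|.
Proof.
rewrite -sum1_card (big_setID [set x | P x]) /= [X in _ + X]big1; last first.
  by move=> i; rewrite !inE => /andP[/negbTE->].
rewrite addn0 [RHS](eq_bigl (fun x => x \in A :&: [set x | P x])); last first.
  by move=> i; rewrite !inE.
by apply: eq_bigr => i; rewrite !inE => /andP[_ ->].
Qed.

Definition mcs (T : finType) (e : rel T) (v : T) : {set {set T}} :=
  [set K | maximal_clique e K & v \in K].
Definition cc (T : finType) (e : rel T) (v : T) : nat := #|mcs e v|.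

Lemma mc_exists (T : finType) (e : rel T) (C : {set T}) :
  clique e C -> exists K, maximal_clique e K /\ C \subset K.
Proof. by case/maxset_exists => K mK sCK; exists K. Qed.

Lemma cc_pos (T : finType) (e : rel T) v : 0 < cc e v.
Proof.
have [K [mK sK]] := mc_exists (clique1 e v).
rewrite card_gt0; apply/set0Pn; exists K; rewrite inE mK /=.
by apply: (subsetP sK); rewrite inE.
Qed.

Lemma cc_le_nbr (T : finType) (e : rel T) (R : {set T}) v :
  symmetric e -> irreflexive e -> diamond_free e -> CIS e ->
  maximal_stable e R -> v \notin R ->
  cc e v <= #|[set u in R | e v u]|.
Proof.
move=> hs hi hd hc mR vR.
pose f (K : {set T}) := odflt v [pick r in K :&: R].
have fP : forall K, K \in mcs e v -> [/\ f K \in K, f K \in R & e v (f K)].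
  move=> K; rewrite inE => /andP[mK vK].
  have := meet1 hi hc mK mR; rewrite /f; case: pickP => [r|].
    rewrite inE => /andP[rK rR] _ /=; split=> //.
    apply: (cliqueP _ _ (maxsetp mK)) => //.
    by apply: contraNneq vR => ->.
  by move/eq_card0; rewrite cardsE => ->.
rewrite /cc -(card_in_imset (f := f)); last first.
  move=> K1 K2 h1 h2 eqf; have [a1 b1 c1] := fP _ h1; have [a2 b2 c2] := fP _ h2.
  move: h1 h2; rewrite !inE => /andP[m1 v1] /andP[m2 v2].
  apply: (unique_clique hs hd m1 m2 v1 a1 v2) => //; first by rewrite eqf.
  by apply: contraNneq vR => ->.
apply: subset_leq_card; apply/subsetP => r /imsetP[K hK ->].
by have [_ b c] := fP _ hK; rewrite inE b c.
Qed.

Lemma sum_cc (T : finType) (e : rel T) (R : {set T}) :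
  irreflexive e -> CIS e -> maximal_stable e R ->
  \sum_(x in R) cc e x = #|[set K | maximal_clique e K]|.
Proof.
move=> hi hc mR.
have -> : \sum_(x in R) cc e x =
   \sum_(x in R) \sum_(K in [set K | maximal_clique e K]) (x \in K : nat).
  apply: eq_bigr => x _; rewrite sum_ind /cc.
  by apply: eq_card => K; rewrite !inE.
rewrite exchange_big /= -sum1_card; apply: eq_bigr => K; rewrite inE => mK.
rewrite sum_ind -(meet1 hi hc mK mR).
by apply: eq_card => x; rewrite !inE andbC.
Qed.


Lemma card_le_omega (T : finType) (e : rel T) (K : {set T}) :
  clique e K -> #|K| <= omega e.
Proof. by move=> cK; rewrite /omega; apply: (leq_bigmax_cond K). Qed.

Lemma card_le_alpha (T : finType) (e : rel T) (S : {set T}) :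
  stable e S -> #|S| <= alpha e.
Proof. by move=> sS; rewrite /alpha; apply: (leq_bigmax_cond S). Qed.

Lemma omega_pos (T : finType) (e : rel T) (v : T) : 0 < omega e.
Proof. by apply: leq_trans (card_le_omega (clique1 e v)); rewrite cards1. Qed.

Lemma deg_le (T : finType) (e : rel T) (o : T) :
  symmetric e -> irreflexive e ->
  #|[set u | e o u]| <= cc e o * (omega e).-1.
Proof.
move=> hs hi.
have -> : #|[set u | e o u]| = \sum_(u in [set: T]) (e o u : nat).
  by rewrite sum_ind; apply: eq_card => u; rewrite !inE.
apply: (@leq_trans (\sum_(u in [set: T]) \sum_(K in mcs e o) (u \in K :\ o : nat))).
  apply: leq_sum => u _; case euo: (e o u) => //.
  have [K [mK sK]] := mc_exists (clique_pair hs euo).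
  have hK : K \in mcs e o by rewrite inE mK; apply: (subsetP sK); rewrite !inE eqxx.
  rewrite (bigD1 K) //= [X in _ <= X + _]/nat_of_bool.
  have -> : u \in K :\ o.
    rewrite !inE (subsetP sK) ?andbT; last by rewrite !inE eqxx orbT.
    by apply: contraTneq euo => ->; rewrite hi.
  by [].
rewrite exchange_big /= -sum_nat_const; apply: leq_sum => K; rewrite inE.
case/andP=> mK oK; rewrite sum_ind.
have -> : #|[set x in [set: T] | x \in K :\ o]| = #|K :\ o|.
  by apply: eq_card => x; rewrite !inE.
have := cardsD1 o K; rewrite oK add1n => hK.
have := card_le_omega (maxsetp mK); rewrite hK.
by case: (omega e).
Qed.


Local Open Scope ring_scope.

Lemma inv_ge (c k : nat) : (0 < c)%N -> (c <= k)%N ->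
  (c%:R / (k%:R ^+ 2) : rat) <= (c%:R)^-1.
Proof.
move=> c0 ck.
have k0 : (0 < k)%N by apply: leq_trans ck.
have c0' : (0 : rat) < c%:R by rewrite ltr0n.
have k0' : (0 : rat) < k%:R by rewrite ltr0n.
rewrite ler_pdivrMr ?exprn_gt0 // ler_pdivlMl //.
by rewrite -natrX -natrM ler_nat; apply: leq_mul.
Qed.

Lemma amgm (c k : nat) : (0 < c)%N -> (0 < k)%N ->
  (2 / k%:R : rat) <= (c%:R)^-1 + c%:R / (k%:R ^+ 2).
Proof.
move=> c0 k0.
have c0' : (0 : rat) < c%:R by rewrite ltr0n.
have k0' : (0 : rat) < k%:R by rewrite ltr0n.
rewrite -subr_ge0.
have -> : (c%:R)^-1 + c%:R / (k%:R ^+ 2) - 2 / k%:R =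
   (k%:R - c%:R) ^+ 2 / (c%:R * k%:R ^+ 2) :> rat.
  by field; rewrite !lt0r_neq0.
by rewrite divr_ge0 ?sqr_ge0 // mulr_ge0 // ?exprn_ge0 // ltW.
Qed.


Definition phi (T : finType) (e : rel T) (O : {set T}) : rat :=
  \sum_(o in O) ((cc e o)%:R)^-1.

Lemma key (T : finType) (e : rel T) (O : {set T}) v :
  symmetric e -> irreflexive e -> diamond_free e -> CIS e ->
  maximal_stable e O ->
  (forall R, maximal_stable e R -> phi e R <= phi e O) ->
  v \notin O ->
  1 <= \sum_(o in [set o in O | e v o]) ((cc e o)%:R : rat)^-1.
Proof.
move=> hs hi hd hc mO opt vO.
set B := [set o in O | e v o].
have sO := stableP _ _ (maxsetp mO).
have k0 : (0 < #|B|)%N.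
  rewrite card_gt0; apply: contraNT vO; rewrite negbK => /eqP B0.
  have st : stable e (v |: O).
    apply/stableP => x y; rewrite !inE.
    have nv : forall o, o \in O -> ~~ e v o.
      move=> o oO; apply/negP => evo.
      have : o \in B by rewrite inE oO evo.
      by rewrite B0 inE.
    case/orP=> [/eqP->|xO] /orP[/eqP->|yO]; rewrite ?hi //.
    - exact: nv.
    - by rewrite hs; apply: nv.
    - exact: sO.
  have := maxsetsup mO st (subsetUr _ _) => eqO.
  by rewrite -eqO setU11.
set k := #|B|.
have stO' : stable e (v |: (O :\: B)).
  apply/stableP => x y; rewrite !in_setU1 !in_setD.
  have nv : forall o, o \notin B -> o \in O -> ~~ e v o.
    by move=> o oB oO; apply: contra oB => evo; rewrite inE oO evo.
  case/orP=> [/eqP->|/andP[xB xO]] /orP[/eqP->|/andP[yB yO]]; rewrite ?hi //.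
  - exact: nv.
  - by rewrite hs; apply: nv.
  - exact: sO.
have [O'' mO'' sO''] := maxset_exists stO'.
have sO2 := stableP _ _ (maxsetp mO'').
have vO'' : v \in O'' by apply: (subsetP sO''); rewrite setU11.
have inO'' : forall o, o \in O -> o \notin B -> o \in O''.
  by move=> o oO oB; apply: (subsetP sO''); rewrite in_setU1 in_setD oB oO orbT.
have eqB : O :\: O'' = B.
  apply/setP => o; rewrite !inE; apply/idP/idP.
  - case/andP=> oO'' oO; rewrite oO /=; apply: contraNT oO'' => evo.
    by apply: inO'' => //; rewrite inE oO.
  - case/andP=> oO evo; rewrite oO andbT; apply/negP => oO''.
    by move: (sO2 _ _ vO'' oO''); rewrite evo.
set D := O'' :\: O.
have ccD : forall a, a \in D -> (cc e a <= k)%N.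
  move=> a; rewrite inE => /andP[aO aO''].
  apply: leq_trans (cc_le_nbr hs hi hd hc mO aO) _.
  apply: subset_leq_card; apply/subsetP => u; rewrite !inE => /andP[uO eau].
  rewrite uO /=; apply: contraTT eau => evu.
  by apply: sO2 => //; apply: inO'' => //; rewrite inE uO.
have split1 : forall F : T -> rat, \sum_(o in O) F o = \sum_(o in O :&: O'') F o + \sum_(o in B) F o.
  by move=> F; rewrite (big_setID O'') /= eqB.
have split2 : forall F : T -> rat, \sum_(o in O'') F o = \sum_(o in O :&: O'') F o + \sum_(o in D) F o.
  by move=> F; rewrite (big_setID O) /= setIC.
have hphi := opt _ mO''; rewrite /phi split1 split2 lerD2l in hphi.
have hsum : \sum_(o in O) ((cc e o)%:R : rat) = \sum_(o in O'') (cc e o)%:R.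
  by rewrite -!natr_sum !sum_cc.
rewrite split1 split2 in hsum; move/addrI: hsum => hsum.
have kq0 : (0 : rat) < k%:R by rewrite ltr0n.
have h1 : \sum_(o in B) ((cc e o)%:R / (k%:R ^+ 2)) <= \sum_(o in B) ((cc e o)%:R : rat)^-1.
  rewrite -mulr_suml hsum mulr_suml; apply: le_trans hphi.
  apply: ler_sum => a aD; apply: inv_ge; [exact: cc_pos | exact: ccD].
have h2 : 2 <= \sum_(o in B) (((cc e o)%:R : rat)^-1 + (cc e o)%:R / (k%:R ^+ 2)).
  apply: le_trans (ler_sum _ (fun o _ => amgm (cc_pos e o) k0)).
  rewrite sumr_const -/k -[X in _ <= X]mulr_natr divfK //; exact: lt0r_neq0.
rewrite big_split /= in h2.
lra.
Qed.


Lemma exists_opt (T : finType) (e : rel T) :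
  exists O, maximal_stable e O /\
    forall R, maximal_stable e R -> phi e R <= phi e O.
Proof.
have st0 : stable e set0 by apply/stableP => x y; rewrite inE.
have [O0 mO0 _] := maxset_exists st0.
case: (@Order.TotalTheory.arg_maxP _ _ _ O0 (maximal_stable e) (phi e) mO0) => O mO hO.
by exists O; split.
Qed.

Lemma sum_cond (T : finType) (A : {set T}) (P : pred T) (F : T -> rat) :
  \sum_(o in [set o in A | P o]) F o = \sum_(o in A) (P o)%:R * F o.
Proof.
rewrite (eq_bigl (fun o => (o \in A) && P o)); last by move=> o; rewrite inE.
rewrite big_mkcondr /=; apply: eq_bigr => o _.
by case: (P o); rewrite ?mul1r ?mul0r.
Qed.

Lemma main_ineq (T : finType) (e : rel T) :
  symmetric e -> irreflexive e -> diamond_free e -> CIS e ->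
  (#|T| <= alpha e * omega e)%N.
Proof.
move=> hs hi hd hc.
have [O [mO opt]] := exists_opt e.
suff : (#|T|%:R : rat) <= (#|O| * omega e)%N%:R.
  rewrite ler_nat => h; apply: leq_trans h _.
  by rewrite leq_mul2r card_le_alpha ?orbT //; exact: maxsetp mO.
pose F := fun o => ((cc e o)%:R : rat)^-1.
have F0 : forall o, 0 <= F o by move=> o; rewrite /F invr_ge0 ler0n.
have step1 : (#|T|%:R : rat) <= \sum_(v : T) ((v \in O)%:R + \sum_(o in O) (e v o)%:R * F o).
  rewrite -sum1_card natr_sum; apply: ler_sum => v _.
  case vO: (v \in O).
  - rewrite /= lerDl sumr_ge0 // => o _; rewrite mulr_ge0 //.
  - rewrite /= add0r -sum_cond; apply: key => //; by rewrite vO.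
apply: le_trans step1 _.
rewrite big_split /= exchange_big /=.
have -> : \sum_i ((i \in O)%:R : rat) = \sum_(j in O) 1.
  rewrite [RHS]big_mkcond /=; apply: eq_bigr => i _; by case: (i \in O).
rewrite -big_split /= natrM -sumr_const.
rewrite mulr_suml; apply: ler_sum => o oO; rewrite mul1r.
rewrite -mulr_suml.
have -> : \sum_i ((e i o)%:R : rat) = (#|[set u | e o u]|)%:R.
  rewrite -natr_sum -sum1_card; congr (_%:R).
  rewrite [RHS]big_mkcond /=; apply: eq_bigr => i _; by rewrite inE hs; case: (e o i).
have hd' := deg_le o hs hi.
have om := omega_pos e o.
have c0 : (0 : rat) < (cc e o)%:R by rewrite ltr0n; exact: cc_pos.
rewrite -(prednK om) -addn1 natrD [X in _ <= X]addrC lerD2l /F.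
rewrite ler_pdivrMr // -natrM ler_nat mulnC; exact: hd'.
Qed.

Lemma alpha_attained (T : finType) (e : rel T) :
  exists S, stable e S /\ #|S| = alpha e.
Proof.
have st0 : stable e set0 by apply/stableP => x y; rewrite inE.
have pos : (0 < #|stable e|)%N by apply/card_gt0P; exists set0.
have [S0 hS0 eqS] := eq_bigmax_cond (fun S : {set T} => #|S|) pos.
by exists S0; split => //; rewrite /alpha eqS.
Qed.

Lemma omega_attained (T : finType) (e : rel T) :
  exists K, clique e K /\ #|K| = omega e.
Proof.
have cl0 : clique e set0 by apply/cliqueP => x y; rewrite inE.
have pos : (0 < #|clique e|)%N by apply/card_gt0P; exists set0.
have [S0 hS0 eqS] := eq_bigmax_cond (fun S : {set T} => #|S|) pos.
by exists S0; split => //; rewrite /omega eqS.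
Qed.

Local Close Scope ring_scope.

Theorem theorem2 (T : finType) (e : rel T) :
  simple_graph e -> diamond_free e -> CIS e ->
  #|T| <= alpha e * omega e /\
  exists S : {set T}, (clique e S || stable e S) /\ #|T| <= #|S| ^ 2.
Proof.
case=> hs hi hd hc.
have h := main_ineq hs hi hd hc.
split=> //.
have [S [sS cS]] := alpha_attained e.
have [K [cK cK']] := omega_attained e.
case: (leqP (omega e) (alpha e)) => hle.
- exists S; rewrite sS orbT; split=> //.
  by apply: leq_trans h _; rewrite cS expnS expn1 leq_mul2l hle orbT.
- exists K; rewrite cK; split=> //.
  apply: leq_trans h _; rewrite cK' expnS expn1 leq_mul2r ltnW ?orbT //.
Qed.
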